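(* Let $\mathcal A\subset\mathbb R^n$ be compact with diameter $D_{\mathcal A}<\infty$, let $\mathcal X=\mathrm{conv}(\mathcal A)$ or $\mathcal X=\mathrm{lin}(\mathcal A)$, and let $f$ be convex and differentiable with $L$-Lipschitz gradient. Let $\{x_t\}_{t\ge0}$ be generated by the AC-FW algorithm described in the context, let $\eta\in(1,2)$, and assume Conditions (D) and (S) hold, with $R\ge1$ the constant of part (iii) of Condition (S). Let $\{h_t\}_{t\ge0}$ denote the elements of $\mathcal G\cap\mathcal I_\eta$ in increasing order. Then for any $t\ge0$, $$f(x_{h_t})-f(x^\star)\le\frac{\max\left\{\left(\frac{2R}{2-\eta}-1\right)(f(x_0)-f(x^\star)),\ \frac{2LR^2D_{\mathcal A}^2}{2-\eta}\right\}}{t+\frac{2R}{2-\eta}-1}.$$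
   Context: $D_{\mathcal A}:=\sup_{x,y\in\mathcal A}\|x-y\|_2$; $\|\nabla f(x)-\nabla f(y)\|_2\le L\|x-y\|_2$. $x^\star$ is an optimal solution of $\min_{x\in\mathcal X}f(x)$. For $x\ne y$, $\ell(x,y):=2|f(y)-f(x)-\nabla f(x)^\top(y-x)|/\|y-x\|_2^2$, $\ell(x,x):=0$. AC-FW algorithm: given a damping sequence $\{r_t\}_{t\ge0}$ and a direction-finding subroutine, pick $x_{-1}\in\mathcal A$, $x_0\in\arg\min_{v\in\mathcal A}\nabla f(x_{-1})^\top v$, $L_0:=\ell(x_{-1},x_0)$. For $t=0,1,\dots$: $v_t\in\arg\min_{v\in\mathcal A}\nabla f(x_t)^\top v$; the subroutine returns $d_t\in\mathbb R^n$ and $\gamma_t^{\max}\in(0,\infty]$; $\gamma_t:=\min\{\nabla f(x_t)^\top d_t/(L_t\|d_t\|_2^2),\gamma_t^{\max}\}$; $\bar x_{t+1}:=x_t-\gamma_td_t$; $L_{t+1}:=\max\{\ell(x_t,\bar x_{t+1}),r_tL_t\}$; $x_{t+1}:=\bar x_{t+1}$ if $f(\bar x_{t+1})<f(x_t)$, else $x_{t+1}:=x_t$. $\mathcal I_\eta:=\{t\ge0:L_{t+1}\le\eta L_t\}$; $\mathcal G:=\{t\ge0:\gamma_t^{\max}\ge1\text{ or }\gamma_t<\gamma_t^{\max}\}$. Condition (D): $r_t\in(0,1]$ for all $t$ and $\prod_{t\ge0}r_t\in(0,1]$. Condition (S): for all $t\ge0$: (i) $\|d_t\|_2\le D_{\mathcal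 A}$ and $x_t-\gamma d_t\in\mathcal X$ for all finite $\gamma\in[0,\gamma_t^{\max}]$; (ii) $\mathcal G$ is infinite; (iii) since $f$ is convex, there is a constant $R\ge1$ independent of $t$ with $\nabla f(x_t)^\top d_t\ge(f(x_t)-f(x^\star))/R$. *)

(* Defs.v *)
From HB Require Import structures.
From mathcomp Require Import all_boot all_order all_algebra.
From mathcomp Require Import all_classical all_reals all_analysis.
Set Implicit Arguments. Unset Strict Implicit. Unset Printing Implicit Defensive.
Import Order.TTheory GRing.Theory Num.Theory.
Import numFieldNormedType.Exports.
Local Open Scope classical_set_scope.
Local Open Scope ring_scope.

Section Defs.
Variables (R : realType) (n : nat).
Notation V := 'rV[R]_n.

Definition dotv (u v : V) : R := \sum_(i < n) u ord0 i * v ord0 i.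
Definition enorm (u : V) : R := Num.sqrt (dotv u u).

Definition diam (A : set V) : R := sup [set enorm (p.1 - p.2) | p in A `*` A].

Definition convhull (A : set V) : set V :=
  [set x | exists (k : nat) (w : 'I_k -> R) (a : 'I_k -> V),
     (forall i, 0 <= w i) /\ \sum_(i < k) w i = 1 /\ (forall i, A (a i)) /\
     x = \sum_(i < k) w i *: a i].

Definition linspan (A : set V) : set V :=
  [set x | exists (k : nat) (w : 'I_k -> R) (a : 'I_k -> V),
     (forall i, A (a i)) /\ x = \sum_(i < k) w i *: a i].

Definition convex_fun (f : V -> R) : Prop :=
  forall (x y : V) (s : R), 0 <= s <= 1 ->
    f (s *: x + (1 - s) *: y) <= s * f x + (1 - s) * f y.

Definition is_gradient (f : V -> R) (grad : V -> V) : Prop :=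
  forall x : V, differentiable f x /\ forall v : V, 'd f x v = dotv (grad x) v.

Definition ell (f : V -> R) (grad : V -> V) (x y : V) : R :=
  if x == y then 0
  else 2 * `|f y - f x - dotv (grad x) (y - x)| / (enorm (y - x)) ^+ 2.

End Defs.

(* Main.v *)
Require Import Defs.
From HB Require Import structures.
From mathcomp Require Import all_boot all_order all_algebra.
From mathcomp Require Import all_classical all_reals all_analysis.
From mathcomp Require Import lra ring.
Import Order.TTheory GRing.Theory Num.Theory.
Import numFieldNormedType.Exports.
Local Open Scope classical_set_scope.
Local Open Scope ring_scope.

Section Vec.
Variables (R : realType) (n : nat).
Implicit Types u w z : 'rV[R]_n.

Lemma dotvC u w : dotv u w = dotv w u.
Proof. by apply: eq_bigr => i _; rewrite mulrC. Qed.

Lemma dotvDl u w z : dotv (u + w) z = dotv u z + dotv w z.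
Proof. by rewrite /dotv -big_split; apply: eq_bigr => i _; rewrite !mxE mulrDl. Qed.

Lemma dotvZl (s : R) u w : dotv (s *: u) w = s * dotv u w.
Proof. by rewrite /dotv mulr_sumr; apply: eq_bigr => i _; rewrite !mxE mulrA. Qed.

Lemma dotvNl u w : dotv (- u) w = - dotv u w.
Proof. by rewrite -scaleN1r dotvZl mulN1r. Qed.

Lemma dotvBl u w z : dotv (u - w) z = dotv u z - dotv w z.
Proof. by rewrite dotvDl dotvNl. Qed.

Lemma dotvDr u w z : dotv z (u + w) = dotv z u + dotv z w.
Proof. by rewrite dotvC dotvDl !(dotvC z). Qed.

Lemma dotvBr u w z : dotv z (u - w) = dotv z u - dotv z w.
Proof. by rewrite dotvC dotvBl !(dotvC z). Qed.

Lemma dotvZr (s : R) u w : dotv w (s *: u) = s * dotv w u.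
Proof. by rewrite dotvC dotvZl dotvC. Qed.

Lemma dotv_ge0 u : 0 <= dotv u u.
Proof. by apply: sumr_ge0 => i _; rewrite -expr2 sqr_ge0. Qed.

Lemma enorm_ge0 u : 0 <= enorm u.
Proof. exact: sqrtr_ge0. Qed.

Lemma enorm_sq u : enorm u ^+ 2 = dotv u u.
Proof. by rewrite /enorm sqr_sqrtr // dotv_ge0. Qed.

Lemma enormZ (s : R) u : enorm (s *: u) = `|s| * enorm u.
Proof.
by rewrite /enorm dotvZl dotvZr mulrA -expr2 sqrtrM ?sqr_ge0 // sqrtr_sqr.
Qed.

Lemma quad_disc (a b c : R) : 0 <= c ->
  (forall t, 0 <= a + 2 * b * t + c * t ^+ 2) -> b ^+ 2 <= a * c.
Proof.
move=> c0 H.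
have [cpos|] := ltP 0 c.
  have := H (- b / c).
  have -> : a + 2 * b * (- b / c) + c * (- b / c) ^+ 2 = a - b ^+ 2 / c.
    by field; rewrite gt_eqF.
  by rewrite subr_ge0 ler_pdivrMr // mulrC.
move=> cle; have c0' : c = 0 by apply/le_anti; rewrite cle c0.
subst c; rewrite mulr0.
have [b0|bn0] := eqVneq b 0; first by rewrite b0 expr0n.
have := H (- (a + 1) / (2 * b)).
have -> : a + 2 * b * (- (a + 1) / (2 * b)) + 0 * (- (a + 1) / (2 * b)) ^+ 2 = -1.
  by field.
by lra.
Qed.

Lemma cauchy_schwarz u w : dotv u w <= enorm u * enorm w.
Proof.
have H : dotv u w ^+ 2 <= dotv u u * dotv w w.
  apply: quad_disc; first exact: dotv_ge0.
  move=> t; have := dotv_ge0 (u + t *: w).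
  rewrite !dotvDl !dotvDr !dotvZl !dotvZr (dotvC w u).
  by move=> h; apply: (le_trans h); rewrite le_eqVlt; apply/orP; left; apply/eqP; ring.
apply: (le_trans (ler_norm _)).
rewrite -(@ler_pXn2r _ 2) ?nnegrE ?normr_ge0 ?mulr_ge0 ?enorm_ge0 //.
by rewrite exprMn !enorm_sq real_normK ?num_real.
Qed.

End Vec.

Section Descent.
Variables (R : realType) (n : nat).
Variables (f : 'rV[R]_n -> R) (grad : 'rV[R]_n -> 'rV[R]_n).
Hypothesis hg : is_gradient f grad.

Lemma line_derive (x u : 'rV[R]_n) (s : R) :
  is_derive s 1 (fun t : R => f (t *: u + x)) (dotv (grad (s *: u + x)) u).
Proof.
set p := s *: u + x.
have E : (fun h : R => h^-1 *: (((fun t : R => f (t *: u + x)) \o shift s) (h *: 1) -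
             f (s *: u + x))) =
         (fun h : R => h^-1 *: ((f \o shift p) (h *: u) - f p)).
  apply/funext => h /=; rewrite /p; congr (_ *: (f _ - _)).
  by rewrite scalerDl [_ *: (1:R)]mulr1 addrA.
have [df dval] := hg p.
have dv : derivable f p u by exact: diff_derivable.
apply: DeriveDef.
  by rewrite /derivable E.
by rewrite /derive E -/(derive f p u) deriveE.
Qed.

End Descent.

Section Descent2.
Variables (R : realType) (n : nat).
Variables (f : 'rV[R]_n -> R) (grad : 'rV[R]_n -> 'rV[R]_n) (L : R).
Hypothesis hg : is_gradient f grad.
Hypothesis hL : forall y z, enorm (grad y - grad z) <= L * enorm (y - z).

Lemma descent_sign (sg : R) (x u : 'rV[R]_n) : sg ^+ 2 = 1 ->
  sg * (f (u + x) - f x - dotv (grad x) u) <= L / 2 * dotv u u.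
Proof.
move=> sg2.
set c1 := dotv (grad x) u; set c2 := L / 2 * dotv u u.
pose phi := fun t : R => sg * f (t *: u + x) - sg * c1 * t - c2 * t ^+ 2.
have dphi : forall s : R, is_derive s (1:R) phi
    (sg * dotv (grad (s *: u + x)) u - sg * c1 - c2 * (2 * s)).
  move=> s.
  have h1 := @line_derive R n f grad hg x u s.
  have h2 : is_derive s 1 (sg \*: (fun t : R => f (t *: u + x)) - (sg * c1) \*: id
        - c2 \*: (@id R ^+ 2)) (sg *: dotv (grad (s *: u + x)) u - (sg * c1) *: (1:R)
        - c2 *: ((2%:R * id s ^+ 1) *: (1:R))) by exact: _.
  have -> : phi = (sg \*: (fun t : R => f (t *: u + x)) - (sg * c1) \*: id
        - c2 \*: (@id R ^+ 2)).
    by apply/funext => t /=; rewrite /phi /= expr2.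
  apply: is_derive_eq h2 _.
  by rewrite /GRing.scale /= !mulr1 expr1.
have key : phi 1 <= phi 0.
  apply: (@ler0_derive1_le_cc _ phi 0 1).
  - by move=> s _; by have [] := dphi s.
  - move=> s; rewrite in_itv /= => /andP [s0 s1].
    have ds := dphi s; rewrite derive1E derive_val.
    have cs := @cauchy_schwarz R n (sg *: (grad (s *: u + x) - grad x)) u.
    rewrite dotvZl dotvBl enormZ in cs.
    have hl := hL (s *: u + x) x.
    rewrite addrK enormZ in hl.
    have nsg : `|sg| = 1.
      by apply/eqP; rewrite -(@eqrXn2 _ 2) // ?normr_ge0 // real_normK ?num_real // sg2 expr1n.
    rewrite nsg mul1r in cs.
    have ns : `|s| = s by rewrite ger0_norm // ltW.
    rewrite ns in hl.
    have eu := @enorm_ge0 R n u.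
    have : enorm (grad (s *: u + x) - grad x) * enorm u <= L * (s * enorm u) * enorm u.
      by apply: ler_wpM2r.
    rewrite -[L * _ * _]mulrA -[s * _ * _]mulrA -expr2 enorm_sq /c2 => h.
    rewrite /c1; have := le_trans cs h; lra.
  - apply: derivable_within_continuous => s _; by have [] := dphi s.
  - by rewrite in_itv /= ler01 lexx.
  - by rewrite in_itv /= ler01 lexx.
  - exact: ler01.
move: key; rewrite /phi !scale1r scale0r add0r expr1n expr0n /= !mulr0 !mulr1 subr0 subr0.
lra.
Qed.

Lemma descent_abs (x y : 'rV[R]_n) :
  `|f y - f x - dotv (grad x) (y - x)| <= L / 2 * dotv (y - x) (y - x).
Proof.
have e : y = (y - x) + x by rewrite subrK.
have h1 := @descent_sign 1 x (y - x) (expr1n _ 2).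
have h2 := @descent_sign (-1) x (y - x) ltac:(by rewrite sqrrN expr1n).
rewrite -e in h1 h2.
rewrite ler_norml; apply/andP; split; lra.
Qed.

End Descent2.

Lemma rec_step (R : realType) (B M m a a' : R) :
  B - 1 <= m -> 1 < m -> 0 <= M -> a * m <= M -> a' <= a ->
  (a' <= a - a / B \/ a ^+ 2 <= M * (a - a')) -> 0 < B ->
  a' * (m + 1) <= M.
Proof.
move=> hBm hm hM ham ha' [] h hB.
  have [a'0|a'0] := lerP a' 0; first by nra.
  have h2 : a' * B <= a * (B - 1).
    have : a' * B <= (a - a / B) * B by rewrite ler_pM2r.
    by rewrite mulrBl mulfVK ?gt_eqF //; lra.
  have a0 : 0 <= a by lra.
  suff : B * (a' * (m + 1)) <= B * M by rewrite ler_pM2l.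
  have s1 : B * (a' * (m + 1)) <= a * (B - 1) * (m + 1).
    have : 0 <= m + 1 by lra.
    nra.
  have s2 : (B - 1) * (m + 1) <= B * m by lra.
  have s3 : a * ((B - 1) * (m + 1)) <= a * (B * m) by rewrite ler_wpM2l.
  nra.
have [a'0|a'0] := lerP a' 0; first by nra.
have Mpos : 0 < M by nra.
suff : M * (a' * (m + 1)) <= M * M by rewrite ler_pM2l.
have e1 : M * a' <= M * a - a ^+ 2 by lra.
have [m3|m3] := lerP m 3.
  have q : 4 * (M * a - a ^+ 2) <= M * M.
    have := sqr_ge0 (M - 2 * a); rewrite !expr2; lra.
  have p0 : 0 <= M * a - a ^+ 2 by nra.
  have : (m + 1) * (M * a - a ^+ 2) <= 4 * (M * a - a ^+ 2).
    by rewrite ler_wpM2r //; lra.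
  have : (m + 1) * (M * a') <= (m + 1) * (M * a - a ^+ 2).
    by rewrite ler_wpM2l //; lra.
  rewrite !mulrA; lra.
have y1 : a * m <= M * (m - 1) by nra.
have q : m ^+ 2 * (M * a - a ^+ 2) <= M * M * (m - 1).
  have -> : m ^+ 2 * (M * a - a ^+ 2) = m * M * (a * m) - (a * m) ^+ 2 by ring.
  have : 0 <= (M - a * m) * (M * (m - 1) - a * m) by apply: mulr_ge0; lra.
  move=> hh; apply: le_trans (_ : _ <= m * M * (a * m) - (a * m) ^+ 2 + (M - a * m) * (M * (m - 1) - a * m)) _; first lra.
  rewrite le_eqVlt; apply/orP; left; apply/eqP; ring.
have : m ^+ 2 * (M * a') <= m ^+ 2 * (M * a - a ^+ 2).
  by rewrite ler_wpM2l // sqr_ge0.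
move=> hq.
have h2 : m ^+ 2 * (M * a') <= M * M * (m - 1) by lra.
have h3 : (M * (a' * (m + 1))) * (m - 1) <= (M * M) * (m - 1).
  have e : (M * (a' * (m + 1))) * (m - 1) = m ^+ 2 * (M * a') - M * a' by ring.
  rewrite e; have : 0 <= M * a' by nra.
  lra.
have m1 : 0 < m - 1 by lra.
by rewrite -(ler_pM2r m1).
Qed.

Section Ell.
Variables (R : realType) (n : nat).
Variables (f : 'rV[R]_n -> R) (grad : 'rV[R]_n -> 'rV[R]_n).

Lemma dotv0r (u : 'rV[R]_n) : dotv u 0 = 0.
Proof. by rewrite -(scale0r 0) dotvZr mul0r. Qed.

Lemma dotv_gt0 (u : 'rV[R]_n) : u != 0 -> 0 < dotv u u.
Proof.
move=> un0; rewrite lt_neqAle dotv_ge0 andbT eq_sym; apply: contra un0 => /eqP H.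
apply/eqP/matrixP => i j; rewrite !mxE (ord1 i).
have := @psumr_eq0P _ _ predT (fun k : 'I_n => u ord0 k * u ord0 k) _ H j isT.
by move=> /(_ (fun k _ => ltac:(rewrite -expr2; exact: sqr_ge0))) /eqP; rewrite mulf_eq0 orbb => /eqP.
Qed.

Lemma ell_bound (y z : 'rV[R]_n) (K : R) : ell f grad y z <= K ->
  f z - f y - dotv (grad y) (z - y) <= K / 2 * dotv (z - y) (z - y).
Proof.
rewrite /ell; case: eqP => [->|yz] hK.
  by rewrite !subrr !dotv0r subr0 mulr0.
have N0 : 0 < dotv (z - y) (z - y).
  by apply: dotv_gt0; rewrite subr_eq0; apply/eqP => e; apply: yz.
rewrite enorm_sq in hK.
have : 2 * `|f z - f y - dotv (grad y) (z - y)| <= K * dotv (z - y) (z - y).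
  by rewrite -ler_pdivrMr.
move=> h; apply: le_trans (ler_norm _) _; lra.
Qed.

Variable L : R.
Hypothesis hg : is_gradient f grad.
Hypothesis hL : forall y z, enorm (grad y - grad z) <= L * enorm (y - z).

Lemma ell_le (y z : 'rV[R]_n) : y != z -> ell f grad y z <= L.
Proof.
move=> yz; rewrite /ell (negbTE yz) enorm_sq.
have N0 : 0 < dotv (z - y) (z - y).
  by apply: dotv_gt0; rewrite subr_eq0 eq_sym.
rewrite ler_pdivrMr //.
have := @descent_abs R n f grad L hg hL y z; lra.
Qed.

End Ell.

Theorem theorem2 (R : realType) (n : nat)
  (A X : set 'rV[R]_n) (f : 'rV[R]_n -> R) (grad : 'rV[R]_n -> 'rV[R]_n)
  (L : R) (xstar : 'rV[R]_n)
  (* algorithm data *)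
  (r : nat -> R) (xm1 : 'rV[R]_n) (x v d xbar : nat -> 'rV[R]_n)
  (gmax : nat -> \bar R) (gamma Lc : nat -> R)
  (eta Rc : R) (h : nat -> nat) :
  (* problem assumptions *)
  compact A ->
  X = convhull A \/ X = linspan A ->
  convex_fun f ->
  is_gradient f grad ->
  (forall y z, enorm (grad y - grad z) <= L * enorm (y - z)) ->
  X xstar -> (forall y, X y -> f xstar <= f y) ->
  (* AC-FW initialization *)
  A xm1 ->
  A (x 0%N) -> (forall u, A u -> dotv (grad xm1) (x 0%N) <= dotv (grad xm1) u) ->
  Lc 0%N = ell f grad xm1 (x 0%N) ->
  0 < Lc 0%N ->
  (* AC-FW iterations *)
  (forall t, A (v t) /\ forall u, A u -> dotv (grad (x t)) (v t) <= dotv (grad (x t)) u) ->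
  (forall t, (0 < gmax t)%E) ->
  (forall t, ((gamma t)%:E =
      mine ((dotv (grad (x t)) (d t) / (Lc t * enorm (d t) ^+ 2))%:E) (gmax t))%E) ->
  (forall t, xbar t = x t - gamma t *: d t) ->
  (forall t, Lc t.+1 = Num.max (ell f grad (x t) (xbar t)) (r t * Lc t)) ->
  (forall t, x t.+1 = if f (xbar t) < f (x t) then xbar t else x t) ->
  (* eta in (1,2) *)
  1 < eta < 2 ->
  (* Condition (D) *)
  (forall t, 0 < r t <= 1) ->
  (exists p : R, 0 < p <= 1 /\
     (fun N : nat => \prod_(i < N) r i) @ \oo --> p) ->
  (* Condition (S) *)
  (forall t, enorm (d t) <= diam A /\
     forall g : R, 0 <= g -> (g%:E <= gmax t)%E -> X (x t - g *: d t)) ->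
  infinite_set [set t : nat | (1 <= gmax t)%E \/ ((gamma t)%:E < gmax t)%E] ->
  1 <= Rc ->
  (forall t, dotv (grad (x t)) (d t) >= (f (x t) - f xstar) / Rc) ->
  (* h enumerates G cap I_eta in increasing order *)
  (forall t, (h t < h t.+1)%N) ->
  (forall s : nat,
     (((1 <= gmax s)%E \/ ((gamma s)%:E < gmax s)%E) /\ Lc s.+1 <= eta * Lc s)
     <-> exists t, h t = s) ->
  forall t : nat,
    f (x (h t)) - f xstar <=
      Num.max ((2 * Rc / (2 - eta) - 1) * (f (x 0%N) - f xstar))
              (2 * L * Rc ^+ 2 * diam A ^+ 2 / (2 - eta))
      / (t%:R + 2 * Rc / (2 - eta) - 1).
Proof.
move=> cA hX convf hg hL Xs hstar Axm1 Ax0 hx0min hL0 hL0pos hv hgpos hgam hxbar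
  hLc hx heta hr hprod hS hinf hR hdesc hh hG.
have AX : forall y, A y -> X y.
  move=> y Ay; case: hX => ->.
    exists 1%N, (fun _ => 1), (fun _ => y); split; first by move=> _; exact: ler01.
    by rewrite !big_ord1 scale1r.
  by exists 1%N, (fun _ => 1), (fun _ => y); rewrite !big_ord1 scale1r.
have xne : xm1 != x 0%N.
  apply/negP => /eqP e; move: hL0pos; rewrite hL0 /ell e eqxx ltxx; done.
have Lpos : 0 < L.
  apply: (lt_le_trans hL0pos); rewrite hL0; exact: ell_le hg hL _ _ xne.
have ellL : forall y z, ell f grad y z <= L.
  move=> y z; have [e|ne] := eqVneq y z; last exact: ell_le hg hL _ _ ne.
  by rewrite /ell e eqxx ltW.
have Rpos : 0 < Rc by apply: lt_le_trans hR; exact: ltr01.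
pose dl := fun t => f (x t) - f xstar.
have inv : forall t, [/\ X (x t), 0 < Lc t & Lc t <= L].
  elim=> [|t [Xt Lt LtL]].
    by split=> //; [exact: AX | rewrite hL0].
  have dl0 : 0 <= dl t by rewrite /dl subr_ge0; exact: hstar.
  have g0 : 0 <= dotv (grad (x t)) (d t).
    by apply: le_trans (hdesc t); apply: divr_ge0; [exact: dl0 | exact: ltW].
  have gam0 : 0 <= gamma t.
    rewrite -lee_fin hgam le_min; apply/andP; split; last exact: ltW.
    rewrite lee_fin; apply: divr_ge0 => //; apply: mulr_ge0; first exact: ltW.
    exact: sqr_ge0.
  have gamle : ((gamma t)%:E <= gmax t)%E by rewrite hgam ge_min lexx orbT.
  have Xbar : X (xbar t) by rewrite hxbar; apply: (hS t).2.
  split.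
  - by rewrite hx; case: ifP.
  - rewrite hLc; apply: lt_le_trans (_ : 0 < r t * Lc t) _.
      by apply: mulr_gt0 => //; case/andP: (hr t).
    by rewrite le_max lexx orbT.
  - rewrite hLc ge_max ellL /=; case/andP: (hr t) => r0 r1; nra.
have dl0 : forall t, 0 <= dl t.
  by move=> t; rewrite /dl subr_ge0; apply: hstar; case: (inv t).
have mono1 : forall t, dl t.+1 <= dl t.
  by move=> t; rewrite /dl hx; case: ifP => hc //; rewrite lerD2r ltW.
have lebar : forall t, dl t.+1 <= f (xbar t) - f xstar.
  move=> t; rewrite /dl hx; case: ifP => hc //.
  by rewrite lerD2r leNgt hc.
have mono : forall a b, (a <= b)%N -> dl b <= dl a.
  move=> a b /subnK <-; elim: (b - a)%N => [|k IH]; first by rewrite add0n.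
  by rewrite addSn; apply: le_trans (mono1 _) IH.
set B := 2 * Rc / (2 - eta).
set P1 := (B - 1) * (f (x 0%N) - f xstar).
set P2 := 2 * L * Rc ^+ 2 * diam A ^+ 2 / (2 - eta).
set M := Num.max P1 P2.
have e2 : 0 < 2 - eta by lra.
have B2 : 2 < B.
  rewrite /B ltr_pdivlMr //; nra.
have MP2 : P2 <= M by rewrite /M le_max lexx orbT.
have MP1 : P1 <= M by rewrite /M le_max lexx.
have M0 : 0 <= M.
  apply: le_trans MP1; apply: mulr_ge0; [lra | exact: dl0].
have step : forall s, ((1 <= gmax s)%E \/ ((gamma s)%:E < gmax s)%E) ->
    Lc s.+1 <= eta * Lc s ->
    dl s.+1 <= dl s - dl s / B \/ dl s ^+ 2 <= M * (dl s - dl s.+1).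
  move=> s hGs hI.
  case: (inv s) => Xs' Ks KsL.
  set g := dotv (grad (x s)) (d s).
  set N := dotv (d s) (d s).
  have gge : dl s / Rc <= g := hdesc s.
  have dlg : dl s <= g * Rc by rewrite -ler_pdivrMr.
  have dls0 := dl0 s.
  have g0 : 0 <= g by apply: le_trans gge; exact: divr_ge0 dls0 (ltW Rpos).
  have N0 : 0 <= N := @dotv_ge0 R n _.
  have ND : N <= diam A ^+ 2.
    rewrite /N -enorm_sq !expr2; apply: ler_pM; try exact: enorm_ge0; exact: (hS s).1.
  have F3 : f (xbar s) <= f (x s) - gamma s * g + eta * Lc s / 2 * (gamma s ^+ 2 * N).
    have ellLc : ell f grad (x s) (xbar s) <= Lc s.+1 by rewrite hLc le_max lexx.
    have e1 := @ell_bound R n f grad _ _ _ ellLc.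
    have exb : xbar s - x s = (- gamma s) *: d s by rewrite hxbar scaleNr addrAC subrr add0r.
    rewrite exb dotvZr dotvZl dotvZr -/g -/N in e1.
    have q : Lc s.+1 / 2 * (gamma s ^+ 2 * N) <= eta * Lc s / 2 * (gamma s ^+ 2 * N).
      apply: ler_wpM2r; first by apply: mulr_ge0 => //; exact: sqr_ge0.
      lra.
    move: e1 q; rewrite !expr2; lra.
  have dlbar : dl s.+1 <= dl s - gamma s * g + eta * Lc s / 2 * (gamma s ^+ 2 * N).
    apply: le_trans (lebar s) _; rewrite /dl; lra.
  have [Nle|Npos] := lerP N 0.
    have Ne : N = 0 by apply/le_anti; rewrite Nle N0.
    have gle : g <= 0.
      have := @cauchy_schwarz R n (grad (x s)) (d s).
      by rewrite /enorm -/N Ne sqrtr0 mulr0.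
    have dle : dl s = 0.
      by apply/le_anti; rewrite dls0 andbT; apply: le_trans dlg _; nra.
    left; have := mono1 s; rewrite dle mul0r; lra.
  have KN : 0 < Lc s * N by apply: mulr_gt0.
  have c0 : 0 < 1 - eta / 2 by lra.
  have [ag|ga] := leP ((g / (Lc s * N))%:E) (gmax s).
    have gae : gamma s = g / (Lc s * N).
      by have := hgam s; rewrite enorm_sq -/N min_l // => -[].
    right.
    set q := g * g / (Lc s * N).
    have q0 : 0 <= q by apply: divr_ge0; [nra | exact: ltW].
    have h1 : (1 - eta / 2) * q <= dl s - dl s.+1.
      have e3 : gamma s * g - eta * Lc s / 2 * (gamma s ^+ 2 * N) = (1 - eta / 2) * q.
        rewrite gae /q; field; apply/andP; split; rewrite gt_eqF //.
      lra.
    have h2 : P2 * (1 - eta / 2) = L * Rc ^+ 2 * diam A ^+ 2.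
      rewrite /P2; field; rewrite gt_eqF //.
    have h3 : g * g <= L * diam A ^+ 2 * q.
      have e4 : q * (Lc s * N) = g * g by rewrite /q mulfVK // gt_eqF.
      rewrite -e4 [_ * q]mulrC; apply: ler_wpM2l => //; apply: ler_pM => //; exact: ltW.
    have h4 : dl s ^+ 2 <= Rc ^+ 2 * (g * g).
      have := ler_pM dls0 dls0 dlg dlg.
      by rewrite expr2 => hq; apply: (le_trans hq); rewrite le_eqVlt; apply/orP; left; apply/eqP; ring.
    have h5 : M * (dl s - dl s.+1) >= P2 * (dl s - dl s.+1).
      apply: ler_wpM2r => //; have := mono1 s; lra.
    have h6 : P2 * (dl s - dl s.+1) >= P2 * ((1 - eta / 2) * q).
      apply: ler_wpM2l => //; rewrite /P2; apply: divr_ge0; last exact: ltW.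
      apply: mulr_ge0; last exact: sqr_ge0.
      apply: mulr_ge0; last exact: sqr_ge0.
      apply: mulr_ge0; [lra | exact: ltW].
    have h7 : P2 * ((1 - eta / 2) * q) = L * diam A ^+ 2 * q * Rc ^+ 2.
      by rewrite mulrA h2; ring.
    have h8 : Rc ^+ 2 * (g * g) <= L * diam A ^+ 2 * q * Rc ^+ 2.
      by rewrite mulrC ler_wpM2r // sqr_ge0.
    lra.
  have gme : (gamma s)%:E = gmax s.
    by rewrite hgam enorm_sq -/N min_r // ltW.
  have g1 : 1 <= gamma s.
    case: hGs => [|]; first by rewrite -gme lee_fin.
    by rewrite gme ltxx.
  have gla : gamma s < g / (Lc s * N) by rewrite -lte_fin gme.
  have gKN : gamma s * (Lc s * N) <= g.
    by apply: ltW; rewrite -ltr_pdivlMr.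
  left.
  have e5 : (1 - eta / 2) * (dl s / Rc) = dl s / B.
    by rewrite /B; field; rewrite !gt_eqF.
  have h1 : eta * Lc s / 2 * (gamma s ^+ 2 * N) <= eta / 2 * (gamma s * g).
    have -> : eta * Lc s / 2 * (gamma s ^+ 2 * N) = eta / 2 * gamma s * (gamma s * (Lc s * N)).
      by ring.
    rewrite -mulrA; apply: ler_wpM2l; first lra.
    by apply: ler_wpM2l => //; lra.
  have h2 : g <= gamma s * g by rewrite ler_peMl.
  have h3 : (1 - eta / 2) * (dl s / Rc) <= (1 - eta / 2) * g by rewrite ler_wpM2l //; lra.
  have h4 : (1 - eta / 2) * g <= (1 - eta / 2) * (gamma s * g) by rewrite ler_wpM2l //; lra.
  have e6 : (1 - eta / 2) * (gamma s * g) = gamma s * g - eta / 2 * (gamma s * g) by ring.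
  lra.
have main : forall k : nat, dl (h k) * (k%:R + B - 1) <= M.
  elim=> [|k IH].
    have := mono 0%N (h 0%N) (leq0n _); rewrite add0r => hm.
    apply: le_trans MP1; rewrite /P1 -/(dl 0%N) [_ * dl 0%N]mulrC.
    by apply: ler_wpM2r => //; lra.
  have [hGk hIk] := (hG (h k)).2 (ex_intro _ k erefl).
  have st := step _ hGk hIk.
  have a'le : dl (h k.+1) <= dl (h k).+1 := mono _ _ (hh k).
  have k0 : 0 <= k%:R :> R := ler0n _ _.
  have -> : (k.+1)%:R + B - 1 = (k%:R + B - 1) + 1 by rewrite -natr1; ring.
  apply: (@rec_step R B M _ (dl (h k))) => //; try lra.
  - by apply: le_trans a'le _; apply: le_trans (mono1 _) _.
  - case: st => [H|H]; [left; lra | right].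
    by apply: le_trans H _; apply: ler_wpM2l => //; lra.
move=> t; have t0 : 0 <= t%:R :> R := ler0n _ _.
by rewrite ler_pdivlMr; [exact: main | lra].
Qed.
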